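(* Let $p\in\Delta_7$ be strictly positive and suppose that one of the six slice determinants $d_{i,j}(p)$ ($i\in\{1,2,3\}$, $j\in\{0,1\}$) vanishes. Then $p\in\operatorname{RBM}_{3,2}$ and $p\in\mathcal{M}_{3,3}$.
   Context: A distribution of three binary random variables is a $2\times2\times2$ tensor $p=(p_{ijk})_{i,j,k\in\{0,1\}}$ with nonnegative entries summing to $1$; the set of these is $\Delta_7$. For $a,b,c\in\mathbb{R}^2_{\ge0}$, $a\otimes b\otimes c$ is the tensor with entries $a_ib_jc_k$. $\mathcal{M}_{3,3}$ is the set of $p\in\Delta_7$ that are a sum of three tensors of the form $a\otimes b\otimes c$ with $a,b,c\in\mathbb{R}^2_{\ge0}$. $\operatorname{RBM}_{3,2}$ is the set of $p\in\Delta_7$ of the form $p=(a_1\otimes b_1\otimes c_1+d_1\otimes e_1\otimes f_1)*(a_2\otimes b_2\otimes c_2+d_2\otimes e_2\otimes f_2)$ with all vectors in $\mathbb{R}^2_{\ge0}$, where $*$ is the entrywise product. The slice determinants are $d_{1,0}=p_{000}p_{011}-p_{001}p_{010}$, $d_{1,1}=p_{100}p_{111}-p_{101}p_{110}$, $d_{2,0}=p_{000}p_{101}-p_{001}p_{100}$, $d_{2,1}=p_{010}p_{111}-p_{011}p_{110}$, $d_{3,0}=p_{000}p_{110}-p_{010}p_{100}$, $d_{3,1}=p_{001}p_{111}-p_{011}p_{101}$. *)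

(* Defs.v *)
(* real numbers R. Binary index 0 is [false], 1 is [true]. *)
From Stdlib Require Import Reals.
Open Scope R_scope.

Definition tensor := bool -> bool -> bool -> R.
Definition vec2 := bool -> R.

Definition nonneg2 (a : vec2) : Prop := forall i, 0 <= a i.

Definition outer3 (a b c : vec2) : tensor := fun i j k => a i * b j * c k.

Definition sumb (f : bool -> R) : R := f false + f true.

Definition in_Delta7 (p : tensor) : Prop :=
  (forall i j k, 0 <= p i j k) /\
  sumb (fun i => sumb (fun j => sumb (fun k => p i j k))) = 1.

Definition strictly_positive (p : tensor) : Prop := forall i j k, 0 < p i j k.

Definition in_M33 (p : tensor) : Prop :=
  in_Delta7 p /\
  exists a1 b1 c1 a2 b2 c2 a3 b3 c3 : vec2,
    nonneg2 a1 /\ nonneg2 b1 /\ nonneg2 c1 /\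
    nonneg2 a2 /\ nonneg2 b2 /\ nonneg2 c2 /\
    nonneg2 a3 /\ nonneg2 b3 /\ nonneg2 c3 /\
    forall i j k, p i j k = outer3 a1 b1 c1 i j k + outer3 a2 b2 c2 i j k
                            + outer3 a3 b3 c3 i j k.

Definition in_RBM32 (p : tensor) : Prop :=
  in_Delta7 p /\
  exists a1 b1 c1 d1 e1 f1 a2 b2 c2 d2 e2 f2 : vec2,
    nonneg2 a1 /\ nonneg2 b1 /\ nonneg2 c1 /\
    nonneg2 d1 /\ nonneg2 e1 /\ nonneg2 f1 /\
    nonneg2 a2 /\ nonneg2 b2 /\ nonneg2 c2 /\
    nonneg2 d2 /\ nonneg2 e2 /\ nonneg2 f2 /\
    forall i j k, p i j k =
      (outer3 a1 b1 c1 i j k + outer3 d1 e1 f1 i j k) *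
      (outer3 a2 b2 c2 i j k + outer3 d2 e2 f2 i j k).

(* slice determinants d_{i,j}, i ∈ {1,2,3} (other i: 0, unused), j : bool (false = 0) *)
Definition slice_det (i : nat) (j : bool) (p : tensor) : R :=
  match i with
  | 1%nat => p j false false * p j true true - p j false true * p j true false
  | 2%nat => p false j false * p true j true - p false j true * p true j false
  | 3%nat => p false false j * p true true j - p false true j * p true false j
  | _ => 0
  end.

(* Main.v *)
Require Import Defs.
From Stdlib Require Import Reals Lra Psatz.
Open Scope R_scope.

Lemma core (p : tensor) (j : bool) :
  in_Delta7 p -> strictly_positive p -> slice_det 1 j p = 0 ->
  in_RBM32 p /\ in_M33 p.
Proof.
  intros HD HP Hd. simpl in Hd.
  assert (Pf : forall x y z, 0 < p x y z) by exact HP.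
  pose (jj := negb j).
  pose (e := fun x y : bool => if Bool.eqb x y then 1 else 0).
  pose (one := fun _ : bool => 1).
  pose (b := fun y => p j y false).
  pose (c := fun z => p j false z / p j false false).
  pose (m00 := p jj false false). pose (m01 := p jj false true).
  pose (m10 := p jj true false). pose (m11 := p jj true true).
  pose (t := m01 * m11 / (m00 * m11 + m10 * m01)).
  pose (g := fun y : bool => if y then m10 else m00).
  pose (h := fun z : bool => if z then t else 1).
  pose (r := fun y : bool => if y then m11 - t * m10 else m01 - t * m00).
  assert (P00 : 0 < m00) by apply HP. assert (P01 : 0 < m01) by apply HP.
  assert (P10 : 0 < m10) by apply HP. assert (P11 : 0 < m11) by apply HP.
  assert (PD : 0 < m00 * m11 + m10 * m01) by nra.
  assert (Pt : 0 < t) by (unfold t; apply Rdiv_lt_0_compat; nra).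
  assert (R0 : m01 - t * m00 = m01 * m01 * m10 / (m00 * m11 + m10 * m01))
    by (unfold t; field; lra).
  assert (R1 : m11 - t * m10 = m11 * m11 * m00 / (m00 * m11 + m10 * m01))
    by (unfold t; field; lra).
  assert (Nr : nonneg2 r).
  { intros [|]; simpl; [rewrite R1|rewrite R0]; left; apply Rdiv_lt_0_compat; try lra;
    apply Rmult_lt_0_compat; nra. }
  assert (Ne : forall x, nonneg2 (e x)) by (intros x y; unfold e; destruct Bool.eqb; lra).
  assert (None : nonneg2 one) by (intros y; unfold one; lra).
  assert (Ng : nonneg2 g) by (intros [|]; simpl; lra).
  assert (Nh : nonneg2 h) by (intros [|]; simpl; lra).
  assert (Pff : 0 < p j false false) by apply HP.
  assert (Nb : nonneg2 b) by (intros y; unfold b; left; apply HP).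
  assert (Nc : nonneg2 c) by (intros y; unfold c; left; apply Rdiv_lt_0_compat; apply HP).
  assert (Nbg : nonneg2 (fun y => b y / g y)).
  { intros [|]; unfold b, g; left; apply Rdiv_lt_0_compat; auto. }
  assert (Nch : nonneg2 (fun z => c z / h z)).
  { intros [|]; unfold c, h; left; apply Rdiv_lt_0_compat; auto; try lra; apply Rdiv_lt_0_compat; auto. }
  assert (Nm0 : nonneg2 (fun y => p jj y false)) by (intros y; left; apply HP).
  assert (Nm1 : nonneg2 (fun y => p jj y true)) by (intros y; left; apply HP).
  assert (Hdet : p j true true = p j true false * p j false true / p j false false).
  { field_simplify_eq; lra. }
  split.
  - split; [exact HD|].
    exists one, g, h, (e jj), r, (e true), (e j), (fun y => b y / g y), (fun z => c z / h z),
      (e jj), one, one.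
    repeat (split; [first [assumption | apply Ne] |]).
    intros x y z. unfold outer3, one, e, g, h, b, c, r, jj in *.
    destruct j, x, y, z; simpl; unfold m00, m01, m10, m11 in *; simpl in *;
      try rewrite Hdet; field; lra.
  - split; [exact HD|].
    exists (e j), b, c, (e jj), (fun y => p jj y false), (e false), (e jj), (fun y => p jj y true), (e true).
    repeat (split; [first [assumption | apply Ne] |]).
    intros x y z. unfold outer3, e, b, c, jj in *.
    destruct j, x, y, z; simpl; simpl in *;
      try rewrite Hdet; field; lra.
Qed.

Lemma perm12 (p : tensor) :
  let q := fun x y z => p y x z in
  in_RBM32 q /\ in_M33 q -> in_RBM32 p /\ in_M33 p.
Proof.
  intros q [[HD [a1 [b1 [c1 [d1 [e1 [f1 [a2 [b2 [c2 [d2 [e2 [f2 H]]]]]]]]]]]]]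
           [_ [u1 [v1 [w1 [u2 [v2 [w2 [u3 [v3 [w3 H']]]]]]]]]]].
  assert (HDp : in_Delta7 p).
  { destruct HD as [H1 H2]; split; [intros; apply (H1 j i k)|].
    unfold q, sumb in *; lra. }
  split; split; auto.
  - exists b1, a1, c1, e1, d1, f1, b2, a2, c2, e2, d2, f2.
    intuition. match goal with Hq : forall _ _ _, q _ _ _ = _ |- _ => specialize (Hq j i k); unfold q, outer3 in *; rewrite Hq; ring end.
  - exists v1, u1, w1, v2, u2, w2, v3, u3, w3.
    intuition. match goal with Hq : forall _ _ _, q _ _ _ = _ |- _ => specialize (Hq j i k); unfold q, outer3 in *; rewrite Hq; ring end.
Qed.

Lemma perm13 (p : tensor) :
  let q := fun x y z => p y z x in
  in_RBM32 q /\ in_M33 q -> in_RBM32 p /\ in_M33 p.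
Proof.
  intros q [[HD [a1 [b1 [c1 [d1 [e1 [f1 [a2 [b2 [c2 [d2 [e2 [f2 H]]]]]]]]]]]]]
           [_ [u1 [v1 [w1 [u2 [v2 [w2 [u3 [v3 [w3 H']]]]]]]]]]].
  assert (HDp : in_Delta7 p).
  { destruct HD as [H1 H2]; split; [intros; apply (H1 k i j)|].
    unfold q, sumb in *; lra. }
  split; split; auto.
  - exists b1, c1, a1, e1, f1, d1, b2, c2, a2, e2, f2, d2.
    intuition. match goal with Hq : forall _ _ _, q _ _ _ = _ |- _ => specialize (Hq k i j); unfold q, outer3 in *; rewrite Hq; ring end.
  - exists v1, w1, u1, v2, w2, u2, v3, w3, u3.
    intuition. match goal with Hq : forall _ _ _, q _ _ _ = _ |- _ => specialize (Hq k i j); unfold q, outer3 in *; rewrite Hq; ring end.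
Qed.

Theorem mainTheorem11 (p : tensor) :
  in_Delta7 p -> strictly_positive p ->
  (exists (i : nat) (j : bool), (i = 1%nat \/ i = 2%nat \/ i = 3%nat) /\ slice_det i j p = 0) ->
  in_RBM32 p /\ in_M33 p.
Proof.
  intros HD HP [i [j [Hi Hd]]]. destruct Hi as [Hi|[Hi|Hi]]; subst i.
  - exact (core p j HD HP Hd).
  - apply perm12. apply (core _ j).
    + destruct HD as [H1 H2]; split; [intros; apply H1|]. unfold sumb in *; lra.
    + intros x y z; apply HP.
    + exact Hd.
  - apply perm13. apply (core _ j).
    + destruct HD as [H1 H2]; split; [intros; apply H1|]. unfold sumb in *; lra.
    + intros x y z; apply HP.
    + exact Hd.
Qed.
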